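(* Let $F$ be a cumulative distribution function of a nonnegative random variable, let $0<\sigma_1<\sigma_2<\cdots<\sigma_T$ be points (arrivals) on the positive real line, and let $\mathbf p=(p_1,\dots,p_T)\in[0,1]^T$. For every $t\in[T]$, the probability that the unit is available at arrival $\sigma_t$ in the random $(F,\boldsymbol\sigma,\mathbf p)$ process is equal to the fraction of the resource available at arrival $\sigma_t$ in the fluid $(F,\boldsymbol\sigma,\mathbf p)$ process. Consequently, the expected reward $r(F,\boldsymbol\sigma,\mathbf p)$ of the random process equals the total reward of the fluid process.
   Context: Random $(F,\boldsymbol\sigma,\mathbf p)$ process: a single unit of a resource starts at time $0$ in the available state; time moves forward along the real line. If the unit is available just prior to $\sigma_t$, then with probability $p_t$ (independently of everything else) it becomes in-use for a random duration $d$ drawn independently from $F$: it is in use on $(\sigma_t,\sigma_t+d)$ and becomes available again at time $\sigma_t+d$. Each switch from available to in-use earns reward $1$; $r(F,\boldsymbol\sigma,\mathbf p)$ denotes the expected total reward. Fluid $(F,\boldsymbol\sigma,\mathbf p)$ process: a single unit of resource is treated as divisible, with fraction $1$ available at time $0$. If a fraction $\delta_t$ is available when $\sigma_t$ arrives, a fraction $p_t\delta_t$ is consumed at $\sigma_t$, earning reward $p_t\delta_t$; of this consumed amount, exactly a fraction $F(d)$ has returned and is available again by time $\sigma_t+d$, for every $d\ge 0$. *)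

(* Defs.v *)
From HB Require Import structures.
From mathcomp Require Import all_boot all_order all_algebra.
From mathcomp Require Import all_classical all_reals all_analysis.
Set Implicit Arguments. Unset Strict Implicit. Unset Printing Implicit Defensive.
Import Order.TTheory GRing.Theory Num.Theory.
Import numFieldNormedType.Exports.
Local Open Scope classical_set_scope.
Local Open Scope ring_scope.

(* Arrivals are indexed 0..n-1 (paper: 1..T). *)

Definition is_cdf_nonneg (R : realType) (F : R -> R) : Prop :=
  [/\ {homo F : x y / x <= y},
      (forall x : R, F y @[y --> x^'+] --> F x),
      (forall x : R, x < 0 -> F x = 0) &
      F x @[x --> +oo] --> (1 : R)].

Section Processes.
Variables (R : realType) (F : R -> R) (sigma p : nat -> R).

(* ---- Random process, on a sample point: coin k says whether arrival k would
   consume the unit if available; dur k is the duration that would be drawn. *)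
Variables (coin : nat -> bool) (dur : nat -> R).

(* time at which the unit is (again) available, after processing arrivals 0..k-1 *)
Fixpoint release_time (k : nat) : R :=
  match k with
  | 0 => 0
  | k'.+1 => let f := release_time k' in
             if (f <= sigma k') && coin k' then sigma k' + dur k' else f
  end.

Definition avail (k : nat) : bool := release_time k <= sigma k.

Definition random_reward (n : nat) : R :=
  \sum_(k < n) (avail k && coin k)%:R.

End Processes.

Section Fluid.
Variables (R : realType) (F : R -> R) (sigma p : nat -> R).

(* fractions available at arrivals 0..k-1:  delta_k = 1 - sum_{s<k} p_s delta_s (1 - F(sigma_k - sigma_s)) *)
Fixpoint fluid_deltas (k : nat) : seq R :=
  match k with
  | 0 => [::]
  | k'.+1 => let ds := fluid_deltas k' in
             rcons ds (1 - \sum_(s < k') p s * nth 0 ds s * (1 - F (sigma k' - sigma s)))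
  end.

Definition fluid_avail (k : nat) : R := nth 0 (fluid_deltas k.+1) k.

Definition fluid_reward (n : nat) : R := \sum_(k < n) p k * fluid_avail k.
End Fluid.

Definition mutually_independent d (T : measurableType d) (R : realType)
  (P : probability T R) (n : nat) (coin : nat -> T -> bool) (dur : nat -> T -> R) : Prop :=
  forall (A : nat -> set bool) (B : nat -> set R),
    (forall i, measurable (B i)) ->
    fine (P (\bigcap_(i in [set i | (i < n)%N])
               ([set w | A i (coin i w)] `&` (dur i @^-1` B i)))) =
    \prod_(i < n) (fine (P [set w | A i (coin i w)]) * fine (P (dur i @^-1` B i))).

(* Main.v *)
Require Import Defs.
From HB Require Import structures.
From mathcomp Require Import all_boot all_order all_algebra.
From mathcomp Require Import all_classical all_reals all_analysis.
From mathcomp Require Import lra ring.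
Import Order.TTheory GRing.Theory Num.Theory.
Import numFieldNormedType.Exports.
Local Open Scope classical_set_scope.
Local Open Scope ring_scope.

Lemma size_deltas (R : realType) (F : R -> R) (sigma p : nat -> R) k :
  size (fluid_deltas F sigma p k) = k.
Proof. by elim: k => //= k IH; rewrite size_rcons IH. Qed.

Lemma nth_deltas (R : realType) (F : R -> R) (sigma p : nat -> R) k s :
  (s < k)%N -> nth 0 (fluid_deltas F sigma p k) s = fluid_avail F sigma p s.
Proof.
elim: k => // k IH; rewrite ltnS leq_eqVlt => /orP [/eqP -> | sk].
  by [].
by rewrite /= nth_rcons size_deltas sk IH.
Qed.

Lemma fluid_availE (R : realType) (F : R -> R) (sigma p : nat -> R) k :
  fluid_avail F sigma p k =
  1 - \sum_(s < k) p s * fluid_avail F sigma p s * (1 - F (sigma k - sigma s)).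
Proof.
rewrite /fluid_avail /= nth_rcons size_deltas ltnn eqxx.
congr (_ - _); apply: eq_bigr => s _; by rewrite nth_deltas.
Qed.

Lemma meas_le d (T : measurableType d) (R : realType) (f : T -> R) (x : R) :
  measurable_fun setT f -> measurable [set w | f w <= x].
Proof.
move=> mf; have := mf measurableT _ (measurable_itv `]-oo, x]).
rewrite setTI; congr measurable; apply/seteqP; split => w /=;
by rewrite in_itv.
Qed.

Lemma meas_rel d (T : measurableType d) (R : realType) (sigma : nat -> R)
  (coin : nat -> T -> bool) (dur : nat -> T -> R) :
  (forall i, measurable [set w | coin i w]) ->
  (forall i, measurable_fun setT (dur i)) ->
  forall m c, measurable [set w | release_time sigma (coin^~ w) (dur^~ w) m <= c].
Proof.
move=> hc hd; elim=> [|m IH] c /=.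
  by case: (boolP (0 <= c)) => h; [rewrite (_ : [set _ | _] = setT) //; apply/seteqP; split => w //= |
    rewrite (_ : [set _ | _] = set0) //; apply/seteqP; split => w //=; rewrite (negbTE h)].
set E := [set w | release_time sigma (coin^~ w) (dur^~ w) m <= sigma m] `&` [set w | coin m w].
have mE : measurable E by apply: measurableI; [exact: IH|exact: hc].
rewrite (_ : [set _ | _] = (E `&` [set w | dur m w <= c - sigma m]) `|`
   (~` E `&` [set w | release_time sigma (coin^~ w) (dur^~ w) m <= c])).
  by apply: measurableU; apply: measurableI => //; try exact: meas_le; try exact: measurableC; exact: IH.
apply/seteqP; split => w /=; rewrite /E /=.
  case: ifP => [/andP[h1 h2] h3|/negbT h1 h3]; [left; split => //; lra|right; split => //].
  move=> [] h4 h5; move: h1; by rewrite h4 h5.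
case=> [[[h1 h2] h3]|[h1 h3]]; first by rewrite h1 h2 /=; lra.
case: ifP => // /andP[h4 h5]; by exfalso; apply: h1.
Qed.

Definition rect {d} {T : measurableType d} {R : realType} n (coin : nat -> T -> bool)
  (dur : nat -> T -> R) (A : nat -> set bool) (B : nat -> set R) : set T :=
  \bigcap_(i in [set i | (i < n)%N]) ([set w | A i (coin i w)] `&` (dur i @^-1` B i)).

Definition amk {R : realType} (F : R -> R) (sigma p : nat -> R) m k :=
  1 - \sum_(s < m) p s * fluid_avail F sigma p s * (1 - F (sigma k - sigma s)).

Lemma meas_coinA d (T : measurableType d) (c : T -> bool) (A : set bool) :
  measurable [set w | c w] -> measurable [set w | A (c w)].
Proof.
move=> mc.
have -> : [set w | A (c w)] = ([set w | c w] `&` [set _ | A true]) `|` (~` [set w | c w] `&` [set _ | A false]).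
  apply/seteqP; split => w /=.
    by case: (c w) => h; [left|right].
  by case: (c w) => -[] //= [].
have mK : forall P : Prop, measurable [set _ : T | P].
  move=> P; have [h|h] := pselect P.
    by rewrite (_ : [set _ | P] = setT) //; apply/seteqP; split.
  by rewrite (_ : [set _ | P] = set0) //; apply/seteqP; split.
by apply: measurableU; apply: measurableI => //; apply: measurableC.
Qed.

Lemma meas_rect d (T : measurableType d) (R : realType) n (coin : nat -> T -> bool)
  (dur : nat -> T -> R) A B :
  (forall i, measurable [set w | coin i w]) ->
  (forall i, measurable_fun setT (dur i)) ->
  (forall i, measurable (B i)) ->
  measurable (rect n coin dur A B).
Proof.
move=> hc hd hB; apply: fin_bigcap_measurable; first exact: finite_II.
move=> i _; apply: measurableI.
  exact: meas_coinA.
by have := hd i measurableT _ (hB i); rewrite setTI.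
Qed.

Lemma rect_update d (T : measurableType d) (R : realType) (P : probability T R) n
  (coin : nat -> T -> bool) (dur : nat -> T -> R) :
  mutually_independent P n coin dur ->
  forall m, (m < n)%N -> forall A B, (forall i, measurable (B i)) ->
  A m = setT -> B m = setT -> forall a b, measurable b ->
  fine (P (rect n coin dur (fun i => if i == m then a else A i)
                           (fun i => if i == m then b else B i)))
  = fine (P [set w | a (coin m w)]) * fine (P (dur m @^-1` b)) *
    fine (P (rect n coin dur A B)).
Proof.
move=> hind m mn A B hB hAm hBm a b hb.
rewrite /rect (hind A B) // (hind (fun i => if i == m then a else A i) (fun i => if i == m then b else B i)); last by move=> i; case: (i == m).
rewrite (bigD1 (Ordinal mn)) //= [in RHS](bigD1 (Ordinal mn)) //= eqxx hAm hBm.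
have -> : [set w | [set: bool] (coin m w)] = setT by apply/seteqP; split.
have -> : dur m @^-1` [set: R] = setT by apply/seteqP; split.
rewrite probability_setT /= !mul1r; congr (_ * _).
apply: eq_bigr => i /negbTE hi.
have -> : (nat_of_ord i == m) = false by apply/negbTE; apply: contraFN hi => /eqP h; apply/eqP/val_inj.
by [].
Qed.

Lemma rect_updE d (T : measurableType d) (R : realType) n
  (coin : nat -> T -> bool) (dur : nat -> T -> R) m (mn : (m < n)%N) A B :
  A m = setT -> B m = setT -> forall a b,
  rect n coin dur (fun i => if i == m then a else A i)
                  (fun i => if i == m then b else B i)
  = [set w | a (coin m w)] `&` (dur m @^-1` b) `&` rect n coin dur A B.
Proof.
move=> hA hB a b; apply/seteqP; split => w /=.
  move=> h; split; last first.
    move=> i /= hi; have := h i hi; case: eqP => [->|//].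
    by rewrite hA hB.
  by have := h m mn; rewrite eqxx.
move=> [[ha hb] h] i /= hi; case: eqP => [->//|_]; exact: h.
Qed.

Lemma fineP {d} {T : measurableType d} {R : realType} {P : probability T R} {X : set T} :
  measurable X -> P X = (fine (P X))%:E.
Proof. by move=> mX; rewrite fineK //; apply: fin_num_measure. Qed.

Lemma fine_setD d (T : measurableType d) (R : realType) (P : probability T R) (X Y : set T) :
  measurable X -> measurable Y -> Y `<=` X ->
  fine (P (X `\` Y)) = fine (P X) - fine (P Y).
Proof.
move=> mX mY YX; rewrite measureD //; last by apply: (le_lt_trans (probability_le1 P mX)); exact: ltey.
rewrite setIidr // fineB //; exact: fin_num_measure.
Qed.

Lemma main_claim d (T : measurableType d) (R : realType) (P : probability T R)
  (F : R -> R) (n : nat) (sigma p : nat -> R)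
  (coin : nat -> T -> bool) (dur : nat -> T -> R) :
  (forall i, (i < n)%N -> 0 < sigma i) ->
  (forall i j, (i < j < n)%N -> sigma i < sigma j) ->
  (forall i, measurable [set w | coin i w]) ->
  (forall i, measurable_fun setT (dur i)) ->
  (forall i, (i < n)%N -> P [set w | coin i w] = (p i)%:E) ->
  (forall i x, (i < n)%N -> P [set w | dur i w <= x] = (F x)%:E) ->
  mutually_independent P n coin dur ->
  forall m, (m <= n)%N -> forall k, (m <= k)%N -> (k < n)%N ->
  forall A B, (forall i, measurable (B i)) ->
  (forall i, (i < m)%N -> A i = setT /\ B i = setT) ->
  fine (P ([set w | release_time sigma (coin^~ w) (dur^~ w) m <= sigma k]
           `&` rect n coin dur A B))
  = amk F sigma p m k * fine (P (rect n coin dur A B)).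
Proof.
move=> hs0 hinc hc hd hp hF hind.
elim=> [|m IH] hmn k hmk hkn A B hB hAB.
  rewrite /amk big_ord0 subr0 mul1r; congr (fine (P _)).
  by apply/seteqP; split => [w []//|w h]; split => //=; apply/ltW/hs0.
have mn : (m < n)%N by [].
have hmk' : sigma m < sigma k by apply: hinc; rewrite hmk.
set c := sigma k - sigma m.
set A' := fun i => if i == m then [set true] else A i.
set B' := fun i => if i == m then [set x | c < x] else B i.
have [hAm hBm] := hAB m (ltnSn m).
have mb : measurable [set x : R | c < x].
  by rewrite (_ : [set x | c < x] = `]c, +oo[%classic); [exact: measurable_itv|
    apply/seteqP; split => x /=; rewrite in_itv /= andbT].
have hB' : forall i, measurable (B' i) by move=> i; rewrite /B'; case: (i == m).
set E := fun j => [set w | release_time sigma (coin^~ w) (dur^~ w) m <= sigma j].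
have mE : forall j, measurable (E j) by move=> j; exact: meas_rel.
have mR := @meas_rect _ _ _ n coin dur A B hc hd hB.
have mR' := @meas_rect _ _ _ n coin dur A' B' hc hd hB'.
have hRE := @rect_updE _ _ _ n coin dur m mn A B hAm hBm [set true] [set x | c < x].
have hsub : E m `&` rect n coin dur A' B' `<=` E k `&` rect n coin dur A B.
  rewrite /A' /B' hRE => w /= [h1 [_ h2]]; split => //; move: h1; rewrite /E /=; lra.
have hset : [set w | release_time sigma (coin^~ w) (dur^~ w) m.+1 <= sigma k]
            `&` rect n coin dur A B =
            (E k `&` rect n coin dur A B) `\` (E m `&` rect n coin dur A' B').
  rewrite /A' /B' hRE /E; apply/seteqP; split => w /=.
    case: ifP => [/andP[h1 h2]|/negbT h1] [h3 h4].
      split; first by split => //; lra.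
      move=> [_ [[_ h5] _]]; move: h5; rewrite /c; lra.
    split=> //; move=> [h5 [[h6 _] _]]; move: h1; by rewrite h5 h6.
  move=> [[h1 h2] h3]; split => //; case: ifP => // /andP[h4 h5].
  rewrite leNgt; apply/negP => h6; apply: h3; split=> //; split => //; split => //=.
  rewrite /c; lra.
rewrite hset fine_setD //; [|exact: measurableI|exact: measurableI].
rewrite (IH (ltnW hmn) k (ltnW hmk) hkn A B hB); last by move=> i /ltnW/hAB.
rewrite (IH (ltnW hmn) m (leqnn m) mn A' B' hB'); last first.
  by move=> i him; rewrite /A' /B' (ltn_eqF him); apply: hAB; apply: ltnW.
rewrite /A' /B' (@rect_update _ _ _ P n coin dur hind m mn A B hB hAm hBm [set true] [set x | c < x] mb).
have -> : [set w | [set true] (coin m w)] = [set w | coin m w] by [].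
rewrite hp // (_ : dur m @^-1` [set x | c < x] = ~` [set w | dur m w <= c]); last first.
  by apply/seteqP; split => w /= h; [apply/negP; rewrite -ltNge | rewrite ltNge; apply/negP].
rewrite probability_setC; last exact: meas_le.
rewrite hF // -EFinB /=.
rewrite /amk big_ord_recr /= -fluid_availE.
rewrite /c; ring.
Qed.

Lemma rect_setT d (T : measurableType d) (R : realType) n
  (coin : nat -> T -> bool) (dur : nat -> T -> R) :
  rect n coin dur (fun _ => setT) (fun _ => setT) = setT.
Proof. by apply/seteqP; split => w //= _ i _. Qed.

Lemma rect_coin d (T : measurableType d) (R : realType) n
  (coin : nat -> T -> bool) (dur : nat -> T -> R) k : (k < n)%N ->
  rect n coin dur (fun i => if i == k then [set true] else setT) (fun _ => setT)
  = [set w | coin k w].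
Proof.
move=> kn; apply/seteqP; split => w /=.
  by move=> h; have := h k kn; rewrite eqxx => -[].
by move=> h i _; case: eqP => [->|]; split.
Qed.

Theorem lemma1 (d : measure_display) (T : measurableType d) (R : realType)
  (P : probability T R) (F : R -> R) (n : nat) (sigma p : nat -> R)
  (coin : nat -> T -> bool) (dur : nat -> T -> R) :
  is_cdf_nonneg F ->
  (forall i, (i < n)%N -> 0 < sigma i) ->
  (forall i j, (i < j < n)%N -> sigma i < sigma j) ->
  (forall i, (i < n)%N -> 0 <= p i <= 1) ->
  (forall i, measurable [set w | coin i w]) ->
  (forall i, measurable_fun setT (dur i)) ->
  (forall i, (i < n)%N -> P [set w | coin i w] = (p i)%:E) ->
  (forall i x, (i < n)%N -> P [set w | dur i w <= x] = (F x)%:E) ->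
  mutually_independent P n coin dur ->
  (forall t, (t < n)%N ->
     P [set w | avail sigma (coin^~ w) (dur^~ w) t] = (fluid_avail F sigma p t)%:E)
  /\
  (\int[P]_w (random_reward sigma (coin^~ w) (dur^~ w) n)%:E
     = (fluid_reward F sigma p n)%:E)%E.
Proof.
move=> _ hs0 hinc _ hc hd hp hF hind.
have MC := @main_claim d T R P F n sigma p coin dur hs0 hinc hc hd hp hF hind.
have mE : forall m c, measurable [set w | release_time sigma (coin^~ w) (dur^~ w) m <= c].
  exact: meas_rel.
split.
  move=> t tn; rewrite /avail (fineP (P:=P) (mE t (sigma t))).
  have := MC t (ltnW tn) t (leqnn t) tn (fun _ => setT) (fun _ => setT)
    (fun _ => measurableT) (fun _ _ => conj erefl erefl).
  rewrite rect_setT setIT probability_setT /= mulr1 => ->.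
  by rewrite /amk -fluid_availE.
set S := fun k => [set w | release_time sigma (coin^~ w) (dur^~ w) k <= sigma k]
                  `&` [set w | coin k w].
have mS : forall k, measurable (S k) by move=> k; apply: measurableI.
rewrite (eq_integral (fun w => \sum_(k < n) (\1_(S k) w)%:E)); last first.
  move=> w _; rewrite /random_reward -sumEFin; apply: eq_bigr => k _.
  congr (_%:E); rewrite indicE; congr (_%:R).
  case: (boolP (w \in S k)) => [/set_mem [h1 h2]|hn]; first by rewrite /avail h1 h2.
  by case: andP => // -[h1 h2]; case/negP: hn; apply: mem_set.
rewrite ge0_integral_sum //; last first.
  by move=> k; apply/measurable_realfun.measurable_EFinP; apply: measurable_realfun.measurable_indic.
rewrite /fluid_reward -sumEFin; apply: eq_bigr => k _.
rewrite integral_indic // setIT.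
have kn := ltn_ord k.
have h := MC k (ltnW kn) k (leqnn k) kn (fun i => if i == k then [set true] else setT)
   (fun _ => setT) (fun _ => measurableT).
rewrite rect_coin // in h.
rewrite -[LHS]fineK; last by apply: fin_num_measure.
congr (_%:E); rewrite /S h; last by move=> i ik; rewrite (ltn_eqF ik).
rewrite (fineP (P:=P) (hc k)) hp //= /amk -fluid_availE mulrC.
by [].
Qed.
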